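(* Consider the discrete-time per-UE credit recursion described in the context, under either debit rule (CBS-DT or CBS-PU). Then: (i) (Bounded credit) for every UE $u$ and every slot $n\ge 0$, $C_u[n]\in[lo_u,hi_u]$; (ii) (Deterministic deficit recovery) if $C_u[k]<0$ for some slot $k$ and no new transmission grant is issued to $u$ in slots $k,k+1,\dots$, then $C_u$ reaches a non-negative value after finitely many slots. Specifically, the recovery time from the worst-case deficit $lo_u$, assuming no grants are issued, is the deterministic value $T^{\mathrm{rec}}_{\max}=\left\lceil -lo_u/\Delta C_u\right\rceil\cdot T_{\mathrm{slot}}$, and this value is tight.
   Context: Time is slotted: slots $n\in\mathbb{Z}_{\ge0}$ have duration $T_{\mathrm{slot}}>0$. A base station serves a finite set of UEs $\{1,\dots,U\}$. For each UE $u$: $Q_u[n]\in\mathbb{Z}_{\ge0}$ is its downlink backlog (bytes) at the start of slot $n$; $G_u[n]\in\{0,1\}$ indicates whether $u$ receives a new (non-retransmission) grant in slot $n$, with transport block size $\mathrm{TBS}_u[n]\ge 0$ bytes. Each UE has a per-slot credit allowance $\Delta C_u=\texttt{idleSlope}_{p(u)}\cdot T_{\mathrm{slot}}>0$ (bytes) and credit bounds $lo_u<0<hi_u$. Define $f(C,\Delta C,Q)=\min(C+\Delta C,0)$ if $C<0$; $f(C,\Delta C,Q)=0$ if $C>0$ and $Q=0$; $f(C,\Delta C,Q)=C+\Delta C$ otherwise. The credit evolves as $C_u[n+1]=\min\{\max\{f(C_u[n],\Delta C_u,Q_u[n])-D_u[n],\,lo_u\},\,hi_u\}$, starting from some $C_u[0]\in[lo_u,hi_u]$,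 where the debit is $D_u[n]=0$ if $G_u[n]=0$, and otherwise $D_u[n]=\mathrm{TBS}_u[n]$ (variant CBS-DT) or $D_u[n]=\min\{\mathrm{TBS}_u[n],Q_u[n]\}$ (variant CBS-PU). A UE is eligible for a new grant in slot $n$ only if (besides MAC conditions: $Q_u[n]>0$, a free HARQ process, not scheduled for HARQ retransmission in slot $n$) $C_u[n]\ge 0$. *)

(* Defs.v *)
From HB Require Import structures.
From mathcomp Require Import all_boot all_order all_algebra.
From mathcomp Require Import reals.
Set Implicit Arguments. Unset Strict Implicit. Unset Printing Implicit Defensive.
Import Order.TTheory GRing.Theory Num.Theory.
Local Open Scope ring_scope.

Inductive cbs_variant := CBS_DT | CBS_PU.

Section Credit.
Variable R : realType.

Definition fcred (C dC : R) (Q : nat) : R :=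
  if C < 0 then Num.min (C + dC) 0
  else if (0 < C) && (Q == 0%N) then 0
  else C + dC.

Definition debit (v : cbs_variant) (G : bool) (TBS : R) (Q : nat) : R :=
  if G then (match v with CBS_DT => TBS | CBS_PU => Num.min TBS Q%:R end)
  else 0.

(* C[n] for one UE, given the initial credit C0, the allowance dC, the
   bounds lo, hi, the backlog Q[.], the new-grant indicator G[.] and TBS[.]. *)
Fixpoint credit (v : cbs_variant) (dC lo hi C0 : R) (Q : nat -> nat)
  (G : nat -> bool) (TBS : nat -> R) (n : nat) : R :=
  match n with
  | 0 => C0
  | n'.+1 =>
      let C := credit v dC lo hi C0 Q G TBS n' in
      Num.min (Num.max (fcred C dC (Q n') - debit v (G n') (TBS n') (Q n')) lo) hi
  end.
End Credit.

(* Main.v *)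
Require Import Defs.
From HB Require Import structures.
From mathcomp Require Import all_boot all_order all_algebra.
From mathcomp Require Import reals.
From mathcomp Require Import lra zify.
Import Order.TTheory GRing.Theory Num.Theory.
Local Open Scope ring_scope.

Section H.
Variables (R : realType) (v : cbs_variant) (dC lo hi C0 : R) (Q : nat -> nat)
  (G : nat -> bool) (TBS : nat -> R).
Hypothesis dCpos : 0 < dC.
Hypothesis lo0 : lo < 0.
Hypothesis hi0 : 0 < hi.
Hypothesis C0b : lo <= C0 <= hi.

Local Notation C := (credit v dC lo hi C0 Q G TBS).

Lemma minmax_b (x : R) : lo <= Num.min (Num.max x lo) hi <= hi.
Proof.
rewrite le_min le_max lexx orbT ge_min lexx orbT /= andbT.
by apply: ltW; apply: lt_trans lo0 hi0.
Qed.

Lemma bounded n : lo <= C n <= hi.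
Proof. by case: n => [|n] //=; apply: minmax_b. Qed.

Lemma step_neg n : G n = false -> C n < 0 -> C n.+1 = Num.min (C n + dC) 0.
Proof.
move=> Gn Hn.
have := bounded n; rewrite /= /fcred /debit Gn Hn subr0.
move=> /andP [h1 h2].
have e1 : Num.max (Num.min (C n + dC) 0) lo = Num.min (C n + dC) 0.
  apply/eqP; rewrite eq_le ge_max le_max lexx andbT le_min.
  rewrite /=; apply/andP; split; have := dCpos; have := lo0; have := hi0; lra.
rewrite e1; apply/min_idPl; rewrite ge_min; apply/orP; right; have := hi0; lra.
Qed.

Lemma traj k m : (forall j, (k <= j)%N -> G j = false) -> C k < 0 ->
  (forall j, (j < m)%N -> C (k + j)%N < 0) ->
  C (k + m)%N = Num.min (C k + m%:R * dC) 0.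
Proof.
move=> HG Hk; elim: m => [|m IH] Hneg.
  by rewrite addn0 mul0r addr0; apply/esym/min_idPl; apply: ltW.
have h := Hneg m (leqnn _).
rewrite addnS step_neg ?HG ?leq_addr //.
have e : C (k + m)%N = C k + m%:R * dC.
  rewrite IH; last by move=> j hj; apply: Hneg; lia.
  rewrite IH in h; last by move=> j hj; apply: Hneg; lia.
  move: h; rewrite gt_min ltxx orbF => h; exact/min_idPl/ltW.
by rewrite e mulrSr mulrDl mul1r addrA.
Qed.

Lemma dich k M : (forall j, (j < M)%N -> C (k + j)%N < 0) \/
  exists2 j, (j < M)%N & 0 <= C (k + j)%N.
Proof.
elim: M => [|M [IH|[j hj hc]]]; first by left.
- case: (ltP (C (k + M)%N) 0) => h.
    left => j; rewrite ltnS leq_eqVlt => /orP [/eqP->|]; [exact: h | exact: IH].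
  by right; exists M.
- by right; exists j => //; apply: ltn_trans hj _.
Qed.

Lemma recover k M : (forall j, (k <= j)%N -> G j = false) -> C k < 0 ->
  0 <= C k + M%:R * dC -> exists2 m, (m <= M)%N & 0 <= C (k + m)%N.
Proof.
move=> HG Hk HM; case: (dich k M) => [h|[j hj hc]].
  exists M => //; rewrite (traj k M HG Hk h).
  by rewrite (min_idPr _) //; apply: HM.
by exists j => //; apply: ltnW.
Qed.

Lemma neg_prefix k M : (forall j, (k <= j)%N -> G j = false) -> C k < 0 ->
  (forall m, (m < M)%N -> C k + m%:R * dC < 0) ->
  forall m, (m <= M)%N -> forall j, (j < m)%N -> C (k + j)%N < 0.
Proof.
move=> HG Hk HM; elim => [|m IH] hm j //.
rewrite ltnS leq_eqVlt => /orP [/eqP->|hj]; last first.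
  by apply: IH => //; apply: ltnW.
rewrite (traj k m HG Hk); last by apply: IH; apply: ltnW.
by rewrite gt_min HM.
Qed.
End H.

Theorem mainTheorem1 (R : realType) (v : cbs_variant) (Tslot : R) (U : nat)
  (P : Type) (p : 'I_U -> P) (idleSlope : P -> R)
  (lo hi C0 : 'I_U -> R) (Q : 'I_U -> nat -> nat) (G : 'I_U -> nat -> bool)
  (TBS : 'I_U -> nat -> R) :
  let dC u := idleSlope (p u) * Tslot in
  let C u n := credit v (dC u) (lo u) (hi u) (C0 u) (Q u) (G u) (TBS u) n in
  0 < Tslot ->
  (forall u, 0 < dC u) ->
  (forall u, lo u < 0 < hi u) ->
  (forall u, lo u <= C0 u <= hi u) ->
  (forall u n, 0 <= TBS u n) ->
  (* eligibility: a new grant is only issued when Q > 0 and C >= 0 *)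
  (forall u n, G u n -> (0 < Q u n)%N /\ 0 <= C u n) ->
  (* (i) bounded credit *)
  (forall u n, lo u <= C u n <= hi u) /\
  (* (ii) deficit recovery in finitely many slots without grants *)
  (forall u k, C u k < 0 -> (forall j, (k <= j)%N -> G u j = false) ->
     exists m, 0 <= C u (k + m)%N) /\
  (* recovery time from any deficit is at most ceil(-lo/dC) slots *)
  (forall u k, C u k < 0 -> (forall j, (k <= j)%N -> G u j = false) ->
     exists m, 0 <= C u (k + m)%N /\
       m%:R * Tslot <= (Num.ceil (- lo u / dC u))%:~R * Tslot) /\
  (* from the worst-case deficit lo, the recovery time is exactly
     ceil(-lo/dC) * Tslot (tightness) *)
  (forall u k, C u k = lo u -> (forall j, (k <= j)%N -> G u j = false) ->
     exists mrec : nat,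
       0 <= C u (k + mrec)%N /\
       (forall m, (m < mrec)%N -> C u (k + m)%N < 0) /\
       mrec%:R * Tslot = (Num.ceil (- lo u / dC u))%:~R * Tslot).
Proof.
move=> dC C hT hdC hlh hC0 _ _.
have Bd : forall u n, lo u <= C u n <= hi u.
  move=> u n; have /andP [h1 h2] := hlh u.
  exact: (@bounded _ v _ _ _ _ _ _ _ h1 h2 (hC0 u)).
have Mfacts : forall u (c : R), c < 0 ->
   let M := `|Num.ceil (- c / dC u)|%N in
   M%:R = (Num.ceil (- c / dC u))%:~R :> R /\ 0 <= c + M%:R * dC u /\
   (forall m, (m < M)%N -> c + m%:R * dC u < 0).
  move=> u c hc M.
  have pos : 0 < - c / dC u by apply: divr_gt0; [rewrite oppr_gt0 | exact: hdC].
  have cpos : (0 <= Num.ceil (- c / dC u))%R by apply: ltW; rewrite ceil_gt0.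
  have eM : M%:R = (Num.ceil (- c / dC u))%:~R :> R.
    by rewrite /M natr_absz ger0_norm.
  split => //; split.
    have := ceil_ge (- c / dC u); rewrite -eM ler_pdivrMr ?hdC // => h.
    by have := h; lra.
  move=> m hm.
  have : (m%:Z < Num.ceil (- c / dC u))%R.
    by rewrite -(gez0_abs cpos) ltz_nat.
  rewrite ceil_gt_int => h.
  have : m%:R < - c / dC u := h.
  rewrite ltr_pdivlMr ?hdC // => h2; lra.
have rec3 : forall u k, C u k < 0 -> (forall j, (k <= j)%N -> G u j = false) ->
     exists m, 0 <= C u (k + m)%N /\
       m%:R * Tslot <= (Num.ceil (- lo u / dC u))%:~R * Tslot.
  move=> u k hk HG.
  have /andP [h1 h2] := hlh u.
  have [eM [hM _]] := Mfacts u _ hk.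
  have [m hm hc] := @recover _ v _ _ _ _ _ _ _ (hdC u) h1 h2 (hC0 u) k _ HG hk hM.
  exists m; split => //; apply: ler_wpM2r; first exact: ltW.
  apply: (le_trans (y := (`|Num.ceil (- C u k / dC u)|%N)%:R)).
    by rewrite ler_nat.
  rewrite eM ler_int; apply: le_ceil.
  rewrite ler_pM2r ?invr_gt0 ?hdC // lerN2.
  by have /andP [] := Bd u k.
split => //; split.
  by move=> u k hk HG; have [m [hm _]] := rec3 u k hk HG; exists m.
split => // u k hk HG.
have /andP [h1 h2] := hlh u.
have hk' : C u k < 0 by rewrite hk.
have [eM [hM hlt]] := Mfacts u _ hk'.
rewrite hk in eM hM hlt.
set M := `|Num.ceil (- lo u / dC u)|%N in eM hM hlt *.
exists M; split; last split.
- have hp : forall j, (j < M)%N -> C u (k + j)%N < 0.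
    by apply: (@neg_prefix _ v _ _ _ _ _ _ _ (hdC u) h1 h2 (hC0 u) k M HG hk') => // m0 hm0; have := hlt m0 hm0; rewrite -{1}hk.
  have ht : C u (k + M)%N = Num.min (C u k + M%:R * dC u) 0 :=
    @traj _ v _ _ _ _ _ _ _ (hdC u) h1 h2 (hC0 u) k M HG hk' hp.
  by rewrite ht hk (min_idPr _).
- by apply: (@neg_prefix _ v _ _ _ _ _ _ _ (hdC u) h1 h2 (hC0 u) k M HG hk') => // m0 hm0; have := hlt m0 hm0; rewrite -{1}hk.
- by rewrite eM.
Qed.
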